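(* Let $n\ge 0$ and let $L$ be one of the divisor classes $2f_{\mathrm{cl}}$, $h+2f_{\mathrm{cl}}$ or $h+(n+2)f_{\mathrm{cl}}$ on $\mathbb F_n$. Let $\phi\in H^0(\mathbb F_n,\mathcal O(4L))$ and $\gamma\in H^0(\mathbb F_n,\mathcal O(6L))$. If a point $x\in\mathbb F_n$ satisfies $\operatorname{ord}_x(\phi)\ge 8$ and $\operatorname{ord}_x(\gamma)\ge 12$, then there is an irreducible curve $C\ni x$ with $\operatorname{ord}_C(\phi)\ge 4$ and $\operatorname{ord}_C(\gamma)\ge 6$.
   Context: $h$ is the class of the section of $\mathbb F_n$ of self-intersection $-n$ and $f_{\mathrm{cl}}$ the fiber class; $h+nf_{\mathrm{cl}}$ is the class of the section of self-intersection $+n$. $\operatorname{ord}_x$ is the multiplicity of a section at the point $x$, $\operatorname{ord}_C$ the vanishing order along the curve $C$ (with the convention that the zero section has infinite order). *)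

(* Defs.v *)
From mathcomp Require Import all_boot all_algebra.
From mathcomp Require Import mpoly.
From mathcomp Require Export complex.
From mathcomp Require Import Rstruct.
Set Implicit Arguments. Unset Strict Implicit. Unset Printing Implicit Defensive.
Import GRing.Theory.
Local Open Scope ring_scope.

Definition C : closedFieldType := complex Rdefinitions.R.

(* Cox ring of the Hirzebruch surface F_n: C[x0,x1,y0,y1], variables indexed
   0,1,2,3 = x0,x1,y0,y1.  F_n = ((C^2\0) x (C^2\0)) / (C^* )^2 with
   (l,m).(x0,x1,y0,y1) = (l x0, l x1, m y0, l^(-n) m y1).
   Fiber class f_cl: {x0 = 0};  h = {y1 = 0} (self-intersection -n);
   h + n f_cl = {y0 = 0} (self-intersection +n). *)
Definition CoxRing := {mpoly C[4]}.

Definition ix0 : 'I_4 := @Ordinal 4 0 isT.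
Definition ix1 : 'I_4 := @Ordinal 4 1 isT.
Definition iy0 : 'I_4 := @Ordinal 4 2 isT.
Definition iy1 : 'I_4 := @Ordinal 4 3 isT.

(* A monomial x0^m0 x1^m1 y0^m2 y1^m3 is a section of O(a h + b f_cl)
   iff m2 + m3 = a and m0 + m1 + n m2 = b. *)
Definition monom_in_class (n a b : nat) (m : 'X_{1..4}) : bool :=
  ((m iy0 + m iy1)%N == a) && ((m ix0 + m ix1 + n * m iy0)%N == b).

Definition section_of_class (n a b : nat) (p : CoxRing) : Prop :=
  forall m, m \in msupp p -> monom_in_class n a b m.

(* Bihomogeneous elements of the Cox ring (of some class, possibly with
   negative f-coefficient): all monomials have the same bidegree
   (m0 + m1 - n m3, m2 + m3) in Z^2. *)
Definition bideg (n : nat) (m : 'X_{1..4}) : int * nat :=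
  ((m ix0 + m ix1)%:Z - (n * m iy1)%:Z, (m iy0 + m iy1)%N).

Definition bihomogeneous (n : nat) (g : CoxRing) : Prop :=
  forall m m', m \in msupp g -> m' \in msupp g -> bideg n m = bideg n m'.

Definition irreducible_cox (g : CoxRing) : Prop :=
  (1 < msize g)%N /\
  forall u v : CoxRing, g = u * v -> (msize u <= 1)%N \/ (msize v <= 1)%N.

Definition Fn_point_rep (P : 'I_4 -> C) : Prop :=
  (P ix0 != 0 \/ P ix1 != 0) /\ (P iy0 != 0 \/ P iy1 != 0).

Definition shift_at (P : 'I_4 -> C) (p : CoxRing) : CoxRing :=
  p \mPo [tuple ('X_i + (P i)%:MP) | i < 4].

(* ord_x(p) >= k, where x is the point of F_n represented by P: the
   multiplicity at x of the section p equals the multiplicity at P of the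
   polynomial p on C^4 (the quotient map is a principal (C^* )^2-bundle,
   in particular smooth, so multiplicities are preserved). *)
Definition ord_pt_ge (P : 'I_4 -> C) (p : CoxRing) (k : nat) : Prop :=
  forall m, m \in msupp (shift_at P p) -> (k <= mdeg m)%N.

Definition on_curve (g : CoxRing) (P : 'I_4 -> C) : Prop := g.@[P] = 0.

(* ord_C(p) >= k for the irreducible curve C = {g = 0}, g irreducible and
   bihomogeneous in the Cox ring: g^k divides p (zero section: infinite order). *)
Definition ord_curve_ge (g p : CoxRing) (k : nat) : Prop :=
  exists q : CoxRing, p = q * g ^+ k.

(* The three divisor classes L = a h + b f_cl, encoded as pairs (a, b). *)
Definition allowed_L (n : nat) (L : nat * nat) : Prop :=
  L = (0%N, 2%N) \/ L = (1%N, 2%N) \/ L = (1%N, (n + 2)%N).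

(* Main.v *)
Require Import Defs.
From mathcomp Require Import all_boot all_algebra.
From mathcomp Require Import mpoly.
From mathcomp Require Import zify ring.
Import GRing.Theory.
Local Open Scope ring_scope.


Section Sup.
Context {n : nat} {R : comNzRingType}.
Implicit Types (p q : {mpoly R[n]}) (S : pred 'X_{1..n}).

Definition sup S p := forall m, m \in msupp p -> S m.

Lemma sup0 S : sup S 0.
Proof. by move=> m; rewrite msupp0. Qed.

Lemma supD S p q : sup S p -> sup S q -> sup S (p + q).
Proof. by move=> hp hq m /msuppD_le; rewrite mem_cat => /orP[/hp|/hq]. Qed.

Lemma supZ S c p : sup S p -> sup S (c *: p).
Proof. by move=> hp m /msuppZ_le /hp. Qed.

Lemma supN S p : sup S p -> sup S (- p).
Proof. by move=> hp m; rewrite (perm_mem (msuppN p)) => /hp. Qed.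

Lemma sup_impl S1 S2 p : (forall m, S1 m -> S2 m) -> sup S1 p -> sup S2 p.
Proof. by move=> h hp m /hp /h. Qed.

Lemma sup_sum S (I : Type) (r : seq I) (P : pred I) (F : I -> {mpoly R[n]}) :
  (forall i, P i -> sup S (F i)) -> sup S (\sum_(i <- r | P i) F i).
Proof.
move=> h; apply: (big_ind (sup S)); [exact: sup0| exact: supD | exact: h].
Qed.

Lemma supM S1 S2 S3 p q :
  (forall m1 m2, S1 m1 -> S2 m2 -> S3 (m1 + m2)%MM) ->
  sup S1 p -> sup S2 q -> sup S3 (p * q).
Proof.
move=> h hp hq m /msuppM_le /allpairsP [[m1 m2] /= [h1 h2 ->]].
exact: h (hp _ h1) (hq _ h2).
Qed.

Lemma supX S m : S m -> sup S 'X_[m].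
Proof. by move=> h m'; rewrite msuppX inE => /eqP ->. Qed.

Lemma sup1 S : S 0%MM -> sup S 1.
Proof. by move=> h m'; rewrite msupp1 inE => /eqP ->. Qed.

Lemma supC S c : S 0%MM -> sup S c%:MP.
Proof. by move=> h m'; rewrite msuppC; case: (c == 0) => //; rewrite inE => /eqP ->. Qed.

Section Graded.
Variable F : nat -> pred 'X_{1..n}.
Hypothesis F0 : F 0 0%MM.
Hypothesis FD : forall a b m1 m2, F a m1 -> F b m2 -> F (a + b) (m1 + m2)%MM.

Lemma supXn c t e : sup (F c) t -> sup (F (c * e)) (t ^+ e).
Proof.
move=> ht; elim: e => [|e ih]; first by rewrite muln0 expr0; apply: sup1.
rewrite exprS mulnS; apply: supM ht ih; exact: FD.
Qed.

Lemma sup_prodX (I : Type) (r : seq I) (c : I -> nat) (t : I -> {mpoly R[n]}) (e : I -> nat) :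
  (forall i, sup (F (c i)) (t i)) ->
  sup (F (\sum_(i <- r) c i * e i)%N) (\prod_(i <- r) t i ^+ e i).
Proof.
move=> ht; elim: r => [|i r ih]; first by rewrite !big_nil; apply: sup1.
rewrite !big_cons; apply: supM (supXn _ _ (e i) (ht i)) ih; exact: FD.
Qed.
End Graded.
End Sup.

Section SupComp.
Context {n k : nat} {R : comNzRingType}.

Lemma sup_comp (F : nat -> pred 'X_{1..k}) (G : pred 'X_{1..k})
   (c : 'I_n -> nat) (t : n.-tuple {mpoly R[k]}) (p : {mpoly R[n]}) :
  F 0 0%MM -> (forall a b m1 m2, F a m1 -> F b m2 -> F (a + b) (m1 + m2)%MM) ->
  (forall i, sup (F (c i)) (tnth t i)) ->
  (forall m, m \in msupp p -> forall m', F (\sum_(i < n) c i * m i)%N m' -> G m') ->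
  sup G (p \mPo t).
Proof.
move=> F0 FD ht hG; rewrite comp_mpolyE big_seq; apply: sup_sum => m /= mp.
apply: supZ => m' hm'.
have := @sup_prodX _ _ F F0 FD _ (index_enum 'I_n) c (fun i => tnth t i) m ht m' hm'.
by move=> h; apply: (hG m mp m' h).
Qed.
End SupComp.

Section CompA.
Context {n k l : nat} {R : comNzRingType}.
Lemma comp_mpolyA (p : {mpoly R[n]}) (s : n.-tuple {mpoly R[k]}) (t : k.-tuple {mpoly R[l]}) :
  (p \mPo s) \mPo t = p \mPo [tuple (tnth s i \mPo t) | i < n].
Proof.
rewrite [p \mPo s]comp_mpolyE [RHS]comp_mpolyE raddf_sum /=.
apply: eq_bigr => m _; rewrite comp_mpolyZ rmorph_prod /=; congr (_ *: _).
by apply: eq_bigr => i _; rewrite rmorphXn /= tnth_map tnth_ord_tuple.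
Qed.
End CompA.


Lemma ord4P (Q : 'I_4 -> Prop) : Q ix0 -> Q ix1 -> Q iy0 -> Q iy1 -> forall i, Q i.
Proof.
move=> h0 h1 h2 h3 [[|[|[|[|j]]]] H] //.
- by have -> : Ordinal H = ix0 by apply: val_inj.
- by have -> : Ordinal H = ix1 by apply: val_inj.
- by have -> : Ordinal H = iy0 by apply: val_inj.
- by have -> : Ordinal H = iy1 by apply: val_inj.
Qed.

Lemma sum4 (F : 'I_4 -> nat) : (\sum_(i < 4) F i = F ix0 + F ix1 + F iy0 + F iy1)%N.
Proof.
rewrite !big_ord_recl big_ord0 addn0 !addnA.
by congr (_ + _ + _ + _); congr F; apply: val_inj.
Qed.

Lemma prod4 (F : 'I_4 -> CoxRing) : \prod_(i < 4) F i = F ix0 * F ix1 * F iy0 * F iy1.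
Proof.
rewrite !big_ord_recl big_ord0 mulr1 !mulrA.
have -> : lift (@ord0 3) (lift (@ord0 2) (lift (@ord0 1) (@ord0 0))) = iy1 by apply: val_inj.
have -> : lift (@ord0 3) (lift (@ord0 2) (@ord0 1)) = iy0 by apply: val_inj.
have -> : lift (@ord0 3) (@ord0 2) = ix1 by apply: val_inj.
by have -> : (@ord0 3) = ix0 by apply: val_inj.
Qed.

Fact tup4_key : unit. Proof. exact: tt. Qed.
Definition tup4 (f0 f1 f2 f3 : CoxRing) : 4.-tuple CoxRing :=
  locked_with tup4_key [tuple f0; f1; f2; f3].

Lemma tup4_0 f0 f1 f2 f3 : tnth (tup4 f0 f1 f2 f3) ix0 = f0. Proof. by rewrite /tup4 unlock. Qed.
Lemma tup4_1 f0 f1 f2 f3 : tnth (tup4 f0 f1 f2 f3) ix1 = f1. Proof. by rewrite /tup4 unlock. Qed.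
Lemma tup4_2 f0 f1 f2 f3 : tnth (tup4 f0 f1 f2 f3) iy0 = f2. Proof. by rewrite /tup4 unlock. Qed.
Lemma tup4_3 f0 f1 f2 f3 : tnth (tup4 f0 f1 f2 f3) iy1 = f3. Proof. by rewrite /tup4 unlock. Qed.
Definition tup4E := (tup4_0, tup4_1, tup4_2, tup4_3).

Lemma compX (i : 'I_4) (t : 4.-tuple CoxRing) : 'X_i \mPo t = tnth t i.
Proof. by rewrite comp_mpolyXU (tnth_nth 0). Qed.

Definition shiftT (v : 'I_4 -> C) : 4.-tuple CoxRing := [tuple ('X_i + (v i)%:MP) | i < 4].

Lemma shift_atE v p : shift_at v p = p \mPo shiftT v.
Proof. by []. Qed.

Lemma tnth_shiftT v i : tnth (shiftT v) i = 'X_i + (v i)%:MP.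
Proof. by rewrite tnth_mktuple. Qed.

Definition wfam (w : 'X_{1..4} -> nat) (d : nat) : pred 'X_{1..4} := fun m => w m == d.
Definition gefam (d : nat) : pred 'X_{1..4} := fun m => (d <= mdeg m)%N.
Definition lefam (d : nat) : pred 'X_{1..4} := fun m => (mdeg m <= d)%N.

Lemma wfam0 w : w 0%MM = 0%N -> wfam w 0 0%MM.
Proof. by move=> h; rewrite /wfam h. Qed.
Lemma wfamD w : (forall m1 m2, w (m1 + m2)%MM = (w m1 + w m2)%N) ->
  forall a b m1 m2, wfam w a m1 -> wfam w b m2 -> wfam w (a + b) (m1 + m2)%MM.
Proof. by move=> h a b m1 m2; rewrite /wfam h => /eqP -> /eqP ->. Qed.
Lemma gefam0 : gefam 0 0%MM. Proof. by []. Qed.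
Lemma gefamD a b m1 m2 : gefam a m1 -> gefam b m2 -> gefam (a + b) (m1 + m2)%MM.
Proof. by rewrite /gefam mdegD; apply: leq_add. Qed.
Lemma lefam0 : lefam 0 0%MM. Proof. by rewrite /lefam mdeg0. Qed.
Lemma lefamD a b m1 m2 : lefam a m1 -> lefam b m2 -> lefam (a + b) (m1 + m2)%MM.
Proof. by rewrite /lefam mdegD; apply: leq_add. Qed.

Lemma mdeg_sum1 (m : 'X_{1..4}) : (\sum_(i < 4) 1 * m i)%N = mdeg m.
Proof. by rewrite mdegE; apply: eq_bigr => i _; rewrite mul1n. Qed.

Lemma compXC (i : 'I_4) (c : C) (t : 4.-tuple CoxRing) :
  ('X_i + c%:MP) \mPo t = tnth t i + c%:MP.
Proof. by rewrite comp_mpolyD compX comp_mpolyC. Qed.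

Definition unshiftT (v : 'I_4 -> C) : 4.-tuple CoxRing := [tuple ('X_i - (v i)%:MP) | i < 4].

Lemma shift_inv v (p : CoxRing) : (p \mPo shiftT v) \mPo unshiftT v = p.
Proof.
rewrite comp_mpolyA.
have -> : [tuple tnth (shiftT v) i \mPo unshiftT v | i < 4] = [tuple 'X_i | i < 4].
  apply: eq_from_tnth => i; rewrite !tnth_mktuple compXC tnth_mktuple.
  by rewrite subrK.
exact: comp_mpoly_id.
Qed.

Lemma sup_contra a k (p : CoxRing) : (a < k)%N -> sup (gefam k) p -> sup (lefam a) p -> p = 0.
Proof.
move=> ak hge hle; apply/eqP; rewrite -msupp_eq0.
case E: (msupp p) => [|m s] //.
have hm : m \in msupp p by rewrite E inE eqxx.
have := hge m hm; have := hle m hm; rewrite /gefam /lefam; lia.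
Qed.

Lemma mdegU (i : 'I_4) : mdeg (U_(i) : 'X_{1..4}) = 1%N.
Proof. exact: mdeg1. Qed.

Definition vst (c2 c3 : C) : 'I_4 -> C :=
  fun i => if i == ix0 then 1 else if i == ix1 then 0 else if i == iy0 then c2 else c3.

Definition wy (m : 'X_{1..4}) := (m iy0 + m iy1)%N.
Definition wb (n : nat) (m : 'X_{1..4}) := (m ix0 + m ix1 + n * m iy0)%N.
Definition w1 (m : 'X_{1..4}) := m ix1.

Lemma wyD m1 m2 : wy (m1 + m2)%MM = (wy m1 + wy m2)%N.
Proof. rewrite /wy !mnmDE; lia. Qed.
Lemma wbD n m1 m2 : wb n (m1 + m2)%MM = (wb n m1 + wb n m2)%N.
Proof. rewrite /wb !mnmDE; lia. Qed.
Lemma w1D m1 m2 : w1 (m1 + m2)%MM = (w1 m1 + w1 m2)%N.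
Proof. by rewrite /w1 !mnmDE. Qed.
Lemma wy0 : wy 0%MM = 0%N. Proof. by rewrite /wy !mnm0E. Qed.
Lemma wb0 n : wb n 0%MM = 0%N. Proof. by rewrite /wb !mnm0E muln0. Qed.
Lemma w10 : w1 0%MM = 0%N. Proof. by rewrite /w1 !mnm0E. Qed.
Lemma mdegD' m1 m2 : mdeg (m1 + m2 : 'X_{1..4})%MM = (mdeg m1 + mdeg m2)%N.
Proof. exact: mdegD. Qed.

Lemma X0_neq0 : ('X_ix0 : CoxRing) != 0.
Proof. by rewrite -msupp_eq0 msuppX. Qed.


Lemma vst_0 c2 c3 : vst c2 c3 ix0 = 1. Proof. by []. Qed.
Lemma vst_1 c2 c3 : vst c2 c3 ix1 = 0. Proof. by []. Qed.
Lemma vst_2 c2 c3 : vst c2 c3 iy0 = c2. Proof. by []. Qed.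
Lemma vst_3 c2 c3 : vst c2 c3 iy1 = c3. Proof. by []. Qed.

Lemma core0 (n a b k : nat) (c2 c3 : C) (q0 : CoxRing) : (a < k)%N ->
  sup (fun m => m ix1 == 0%N) q0 -> sup (wfam wy a) q0 -> sup (wfam (wb n) b) q0 ->
  sup (gefam k) (q0 \mPo shiftT (vst c2 c3)) -> q0 = 0.
Proof.
move=> ak h1 hy hb hsh.

have E1 : (q0 \mPo tup4 1 'X_ix1 'X_iy0 'X_iy1) \mPo shiftT (vst c2 c3) = (q0 \mPo shiftT (vst c2 c3)) \mPo (tup4 0 'X_ix1 'X_iy0 'X_iy1).
  rewrite (comp_mpolyA q0 (tup4 1 'X_ix1 'X_iy0 'X_iy1)) (comp_mpolyA q0 (shiftT (vst c2 c3))).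
  apply: (f_equal (fun t => q0 \mPo t)).
  apply: eq_from_tnth => i.
  rewrite [LHS]tnth_mktuple.
  rewrite [RHS]tnth_mktuple tnth_shiftT compXC.
  move: i; apply: ord4P.
  - by rewrite (tup4_0 1) (tup4_0 0) rmorph1 add0r vst_0.
  - by rewrite (tup4_1 1) (tup4_1 0) compX tnth_shiftT.
  - by rewrite (tup4_2 1) (tup4_2 0) compX tnth_shiftT.
  - by rewrite (tup4_3 1) (tup4_3 0) compX tnth_shiftT.
set T1 := tup4 1 'X_ix1 'X_iy0 'X_iy1.
have hq00 : sup (wfam mdeg a) (q0 \mPo T1).
  apply: (@sup_comp _ _ _ (wfam mdeg) _ (fun i => if i == ix0 then 0%N else 1%N)).
  - exact: wfam0 mdeg0.
  - exact: wfamD mdegD'.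
  - apply: ord4P.
    + by rewrite tup4_0; apply: sup1; rewrite /wfam mdeg0.
    + by rewrite tup4_1; apply: supX; rewrite /wfam mdegU.
    + by rewrite tup4_2; apply: supX; rewrite /wfam mdegU.
    + by rewrite tup4_3; apply: supX; rewrite /wfam mdegU.
  - move=> m hm m'; rewrite sum4 /=.
    have := h1 m hm; have := hy m hm; rewrite /wfam /wy.
    move=> /eqP <- /eqP ->; by rewrite mul0n !mul1n.
have hle : sup (lefam a) ((q0 \mPo T1) \mPo shiftT (vst c2 c3)).
  apply: (@sup_comp _ _ _ lefam _ (fun i => 1%N)).
  - exact: lefam0.
  - exact: lefamD.
  - move=> i; rewrite tnth_shiftT; apply: supD.
      by apply: supX; rewrite /lefam mdegU.
    by apply: supC; rewrite /lefam mdeg0.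
  - move=> m hm m'; rewrite mdeg_sum1; have := hq00 m hm; rewrite /wfam /lefam.
    by move=> /eqP ->.
have hge : sup (gefam k) ((q0 \mPo T1) \mPo shiftT (vst c2 c3)).
  rewrite E1; apply: (@sup_comp _ _ _ gefam _ (fun i => 1%N)).
  - exact: gefam0.
  - exact: gefamD.
  - apply: ord4P.
    + rewrite tup4_0; exact: sup0.
    + by rewrite tup4_1; apply: supX; rewrite /gefam mdegU.
    + by rewrite tup4_2; apply: supX; rewrite /gefam mdegU.
    + by rewrite tup4_3; apply: supX; rewrite /gefam mdegU.
  - move=> m hm m'; rewrite mdeg_sum1; have := hsh m hm; rewrite /gefam.
    exact: leq_trans.
have Z : q0 \mPo T1 = 0.
  by rewrite -(shift_inv (vst c2 c3) (q0 \mPo T1)) (@sup_contra a k _ ak hge hle) comp_mpoly0.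
set T2 := tup4 'X_ix0 'X_ix1 'X_iy0 ('X_ix0 ^+ n * 'X_iy1).
have R : 'X_ix0 ^+ (n * a) * q0 = 'X_ix0 ^+ b * ((q0 \mPo T1) \mPo T2).
  rewrite comp_mpolyA comp_mpolyE {1}(mpolyE q0) !mulr_sumr.
  apply: eq_big_seq => m hm; rewrite -!scalerAr.
  apply: (f_equal (fun x => q0@_m *: x)).
  rewrite (@mpolyXE_id 4 C m) !prod4 !tnth_mktuple /T1 (tup4_0 1) tup4_1 tup4_2 tup4_3.
  rewrite rmorph1 !compX /T2 tup4_1 tup4_2 tup4_3.
  have := h1 m hm; have := hy m hm; have := hb m hm; rewrite /wfam /wy /wb.
  move=> /eqP eb /eqP ea /eqP e1.
  have e : (n * a + m ix0 = b + n * m iy1)%N by rewrite -eb -ea e1; lia.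
  rewrite expr1n exprMn -exprM.
  transitivity ('X_ix0 ^+ (n * a + m ix0) * ('X_ix1 ^+ m ix1 * 'X_iy0 ^+ m iy0 * 'X_iy1 ^+ m iy1) : CoxRing).
    by rewrite exprD; ring.
  by rewrite e exprD; ring.
move: R; rewrite Z comp_mpoly0 mulr0 => /eqP.
by rewrite mulf_eq0 expf_eq0 (negbTE X0_neq0) andbF /= => /eqP.
Qed.


Lemma suppMX1 (p : CoxRing) m : m \in msupp p -> (U_(ix1) + m)%MM \in msupp (p * 'X_ix1).
Proof. by move=> hm; rewrite (perm_mem (msuppMX p U_(ix1))); apply: map_f. Qed.

Lemma compS1 c2 c3 : ('X_ix1 : CoxRing) \mPo shiftT (vst c2 c3) = 'X_ix1.
Proof. by rewrite compX tnth_shiftT vst_1 raddf0 addr0. Qed.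

Lemma step (n a b k : nat) (c2 c3 : C) (q : CoxRing) : (a < k)%N ->
  sup (wfam wy a) q -> sup (wfam (wb n) b) q ->
  sup (gefam k) (q \mPo shiftT (vst c2 c3)) ->
  exists r, [/\ q = r * 'X_ix1, sup (wfam wy a) r, sup (wfam (wb n) b.-1) r
              & sup (gefam k.-1) (r \mPo shiftT (vst c2 c3))].
Proof.
move=> ak hy hb hsh.
set S := shiftT (vst c2 c3).
set q0 := \sum_(m <- msupp q | m ix1 == 0%N) q@_m *: 'X_[m].
set q1 := \sum_(m <- msupp q | m ix1 != 0%N) q@_m *: 'X_[m - U_(ix1)].
have Eq : q = q0 + q1 * 'X_ix1.
  rewrite {1}(mpolyE q) (bigID (fun m : 'X_{1..4} => m ix1 == 0%N)) /=.
  apply: (f_equal (fun x => q0 + x)); rewrite /q1 mulr_suml.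
  apply: eq_bigr => m hm; rewrite -scalerAl -mpolyXD.
  apply: (f_equal (fun x => q@_m *: 'X_[x])); apply/mnmP => i.
  rewrite mnmDE mnmBE mnm1E; case: eqP => [<-|_]; last by rewrite subn0 addn0.
  by rewrite subnK // lt0n.
have hq0 : forall (Pr : pred 'X_{1..4}), (forall m, m \in msupp q -> m ix1 == 0%N -> Pr m) -> sup Pr q0.
  move=> Pr hPr; rewrite /q0 big_seq_cond; apply: sup_sum => m /andP[hm h0].
  by apply: supZ; apply: supX; apply: hPr.
have h0S : sup (fun m => m ix1 == 0%N) (q0 \mPo S).
  apply: (@sup_comp _ _ _ (wfam w1) _ (fun i => nat_of_bool (i == ix1))).
  - exact: wfam0 w10.
  - exact: wfamD w1D.
  - apply: ord4P; rewrite /S tnth_shiftT.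
    + by apply: supD; [apply: supX; rewrite /wfam /w1 mnm1E | apply: supC; rewrite /wfam /w1 mnm0E].
    + by rewrite vst_1 raddf0 addr0; apply: supX; rewrite /wfam /w1 mnm1E.
    + by apply: supD; [apply: supX; rewrite /wfam /w1 mnm1E | apply: supC; rewrite /wfam /w1 mnm0E].
    + by apply: supD; [apply: supX; rewrite /wfam /w1 mnm1E | apply: supC; rewrite /wfam /w1 mnm0E].
  - move=> m hm m'; rewrite sum4 /= !mul0n add0n addn0 mul1n /wfam /w1.
    rewrite addn0; move=> /eqP ->; exact: (hq0 (fun m => m ix1 == 0%N) (fun m _ h => h)) m hm.
have h1S : sup (fun m => 0 < m ix1)%N ((q1 \mPo S) * 'X_ix1).
  apply: (@supM _ _ predT (fun m => 0 < m ix1)%N).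
  - by move=> m1 m2 _; rewrite mnmDE; lia.
  - by move=> m _.
  - by apply: supX; rewrite mnm1E eqxx.
have hq0S : sup (gefam k) (q0 \mPo S).
  move=> m hm; apply: hsh; rewrite Eq rmorphD rmorphM /= compS1.
  rewrite mcoeff_msupp mcoeffD.
  have -> : ((q1 \mPo S) * 'X_ix1)@_m = 0.
    apply/eqP; rewrite mcoeff_eq0; apply/negP => /h1S.
    by rewrite (eqP (h0S m hm)).
  by rewrite addr0 -mcoeff_msupp.
have Z : q0 = 0.
  apply: (@core0 n a b k c2 c3 q0 ak _ _ _ hq0S).
  - by apply: hq0 => m _.
  - by apply: hq0 => m hm _; apply: hy.
  - by apply: hq0 => m hm _; apply: hb.
rewrite Z add0r in Eq.
rewrite Eq in hy hb hsh.
rewrite /S rmorphM /= compS1 in hsh.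
exists q1; split.
- exact: Eq.
- move=> m hm; have := hy _ (@suppMX1 q1 m hm); rewrite /wfam wyD.
  by rewrite /wy !mnm1E.
- move=> m hm; have := hb _ (@suppMX1 _ m hm); rewrite /wfam wbD.
  rewrite /wb !mnm1E /= => /eqP <-; lia.
- move=> m hm; have := hsh _ (@suppMX1 _ m hm).
  rewrite /gefam mdegD mdegU; lia.
Qed.


Lemma iter_step (n a : nat) c2 c3 : forall j k b (q : CoxRing), (j + a <= k)%N ->
  sup (wfam wy a) q -> sup (wfam (wb n) b) q ->
  sup (gefam k) (q \mPo shiftT (vst c2 c3)) -> exists r, q = r * 'X_ix1 ^+ j.
Proof.
elim=> [|j ih] k b q hk hy hb hs.
  by exists q; rewrite expr0 mulr1.
have ak : (a < k)%N by lia.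
have [r [Eq hy' hb' hs']] := @step n a b k c2 c3 q ak hy hb hs.
have hk' : (j + a <= k.-1)%N by lia.
have [r' Er] := ih k.-1 b.-1 r hk' hy' hb' hs'.
by exists r'; rewrite Eq Er exprSr mulrA.
Qed.


Definition sigT (P : 'I_4 -> C) (e0 e1 : C) : 4.-tuple CoxRing :=
  tup4 ((P ix0)%:MP * 'X_ix0 + e0%:MP * 'X_ix1) ((P ix1)%:MP * 'X_ix0 + e1%:MP * 'X_ix1)
       'X_iy0 'X_iy1.

Definition tauT (P : 'I_4 -> C) (e0 e1 D : C) : 4.-tuple CoxRing :=
  tup4 ((e1 / D)%:MP * 'X_ix0 - (e0 / D)%:MP * 'X_ix1)
       ((P ix0 / D)%:MP * 'X_ix1 - (P ix1 / D)%:MP * 'X_ix0) 'X_iy0 'X_iy1.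

Lemma sig_tau (P : 'I_4 -> C) (e0 e1 : C) (p : CoxRing) :
  P ix0 * e1 - P ix1 * e0 != 0 ->
  (p \mPo sigT P e0 e1) \mPo tauT P e0 e1 (P ix0 * e1 - P ix1 * e0) = p.
Proof.
move=> hD; set D := P ix0 * e1 - P ix1 * e0.
rewrite comp_mpolyA.
have -> : [tuple tnth (sigT P e0 e1) i \mPo tauT P e0 e1 D | i < 4] = [tuple 'X_i | i < 4].
  apply: eq_from_tnth => i; rewrite [LHS]tnth_mktuple [RHS]tnth_mktuple.
  move: i; apply: ord4P.
  - rewrite tup4_0 rmorphD !rmorphM /= !comp_mpolyC !compX tup4_0 tup4_1.
    transitivity ((P ix0 * (e1 / D) - e0 * (P ix1 / D))%:MP * 'X_ix0
       + (e0 * (P ix0 / D) - P ix0 * (e0 / D))%:MP * 'X_ix1 : CoxRing).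
      by rewrite !rmorphB !rmorphM /=; ring.
    have -> : P ix0 * (e1 / D) - e0 * (P ix1 / D) = 1 by rewrite /D; field.
    have -> : e0 * (P ix0 / D) - P ix0 * (e0 / D) = 0 by ring.
    by rewrite rmorph1 raddf0 mul1r mul0r addr0.
  - rewrite tup4_1 rmorphD !rmorphM /= !comp_mpolyC !compX tup4_0 tup4_1.
    transitivity ((P ix1 * (e1 / D) - e1 * (P ix1 / D))%:MP * 'X_ix0
       + (e1 * (P ix0 / D) - P ix1 * (e0 / D))%:MP * 'X_ix1 : CoxRing).
      by rewrite !rmorphB !rmorphM /=; ring.
    have -> : e1 * (P ix0 / D) - P ix1 * (e0 / D) = 1 by rewrite /D; field.
    have -> : P ix1 * (e1 / D) - e1 * (P ix1 / D) = 0 by ring.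
    by rewrite rmorph1 raddf0 mul1r mul0r add0r.
  - by rewrite tup4_2 compX tup4_2.
  - by rewrite tup4_3 compX tup4_3.
exact: comp_mpoly_id.
Qed.

Lemma shift_sig (P : 'I_4 -> C) (e0 e1 : C) (p : CoxRing) :
  (p \mPo sigT P e0 e1) \mPo shiftT (vst (P iy0) (P iy1)) =
  (p \mPo shiftT P) \mPo sigT P e0 e1.
Proof.
rewrite !comp_mpolyA.
apply: (f_equal (fun t => p \mPo t)).
apply: eq_from_tnth => i; rewrite [LHS]tnth_mktuple [RHS]tnth_mktuple tnth_shiftT compXC /sigT.
move: i; apply: ord4P.
- rewrite tup4_0 rmorphD !rmorphM /= !comp_mpolyC !compX !tnth_shiftT vst_0 vst_1.
  by rewrite rmorph1 raddf0; ring.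
- rewrite tup4_1 rmorphD !rmorphM /= !comp_mpolyC !compX !tnth_shiftT vst_0 vst_1.
  by rewrite rmorph1 raddf0; ring.
- by rewrite tup4_2 compX tnth_shiftT vst_2.
- by rewrite tup4_3 compX tnth_shiftT vst_3.
Qed.

Lemma supCX (F : pred 'X_{1..4}) (c : C) (i : 'I_4) :
  F U_(i)%MM -> sup F (c%:MP * 'X_i : CoxRing).
Proof. by move=> h; rewrite mul_mpolyC; apply: supZ; apply: supX. Qed.

Lemma sig_sup (n a b k : nat) (P : 'I_4 -> C) (e0 e1 : C) (p : CoxRing) :
  sup (wfam wy a) p -> sup (wfam (wb n) b) p -> sup (gefam k) (p \mPo shiftT P) ->
  [/\ sup (wfam wy a) (p \mPo sigT P e0 e1), sup (wfam (wb n) b) (p \mPo sigT P e0 e1)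
    & sup (gefam k) ((p \mPo shiftT P) \mPo sigT P e0 e1)].
Proof.
move=> hy hb hs; split.
- apply: (@sup_comp _ _ _ (wfam wy) _ (fun i => if (i == iy0) || (i == iy1) then 1%N else 0%N)).
  + exact: wfam0 wy0.
  + exact: wfamD wyD.
  + rewrite /sigT; apply: ord4P.
    * by rewrite tup4_0; apply: supD; apply: supCX; rewrite /wfam /wy !mnm1E.
    * by rewrite tup4_1; apply: supD; apply: supCX; rewrite /wfam /wy !mnm1E.
    * by rewrite tup4_2; apply: supX; rewrite /wfam /wy !mnm1E.
    * by rewrite tup4_3; apply: supX; rewrite /wfam /wy !mnm1E.
  + move=> m hm m'; rewrite sum4 /=; have := hy m hm; rewrite /wfam /wy.
    move=> /eqP <-; rewrite !mul0n !mul1n !add0n; by [].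
- apply: (@sup_comp _ _ _ (wfam (wb n)) _
     (fun i => if (i == ix0) || (i == ix1) then 1%N else if i == iy0 then n else 0%N)).
  + exact: wfam0 (wb0 n).
  + exact: wfamD (wbD n).
  + rewrite /sigT; apply: ord4P.
    * by rewrite tup4_0; apply: supD; apply: supCX; rewrite /wfam /wb !mnm1E /= muln0.
    * by rewrite tup4_1; apply: supD; apply: supCX; rewrite /wfam /wb !mnm1E /= muln0.
    * by rewrite tup4_2; apply: supX; rewrite /wfam /wb !mnm1E /= muln1.
    * by rewrite tup4_3; apply: supX; rewrite /wfam /wb !mnm1E /= muln0.
  + move=> m hm m'; rewrite sum4 /=; have := hb m hm; rewrite /wfam /wb.
    move=> /eqP <-; rewrite !mul0n !mul1n addn0 [(n * _)%N]mulnC; by [].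
- apply: (@sup_comp _ _ _ gefam _ (fun i => 1%N)).
  + exact: gefam0.
  + exact: gefamD.
  + rewrite /sigT; apply: ord4P.
    * by rewrite tup4_0; apply: supD; apply: supCX; rewrite /gefam mdegU.
    * by rewrite tup4_1; apply: supD; apply: supCX; rewrite /gefam mdegU.
    * by rewrite tup4_2; apply: supX; rewrite /gefam mdegU.
    * by rewrite tup4_3; apply: supX; rewrite /gefam mdegU.
  + move=> m hm m'; rewrite mdeg_sum1; have := hs m hm; rewrite /gefam.
    exact: leq_trans.
Qed.

Lemma main_div (n a b k j : nat) (P : 'I_4 -> C) (e0 e1 : C) (p : CoxRing) :
  P ix0 * e1 - P ix1 * e0 != 0 -> (j + a <= k)%N ->
  sup (wfam wy a) p -> sup (wfam (wb n) b) p -> sup (gefam k) (p \mPo shiftT P) ->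
  exists Q, p = Q * ((P ix1)%:MP * 'X_ix0 - (P ix0)%:MP * 'X_ix1) ^+ j.
Proof.
move=> hD hj hy hb hs.
have [hy' hb' hs'] := @sig_sup n a b k P e0 e1 p hy hb hs.
rewrite -shift_sig in hs'.
have [r Er] := @iter_step n a (P iy0) (P iy1) j k b _ hj hy' hb' hs'.
exists ((r \mPo tauT P e0 e1 (P ix0 * e1 - P ix1 * e0)) * ((- (P ix0 * e1 - P ix1 * e0)^-1)%:MP) ^+ j).
rewrite -{1}(@sig_tau P e0 e1 p hD) Er rmorphM rmorphXn /= compX /tauT tup4_1.
rewrite -mulrA -exprMn; apply: (f_equal (fun x => _ * x ^+ j)).
by rewrite !rmorphM rmorphN /=; ring.
Qed.


Definition ellP (P : 'I_4 -> C) : CoxRing := (P ix1)%:MP * 'X_ix0 - (P ix0)%:MP * 'X_ix1.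

Lemma ell_sup P : sup (fun m => (m == U_(ix0)%MM) || (m == U_(ix1)%MM)) (ellP P).
Proof.
apply: supD; last apply: supN; apply: supCX; by rewrite eqxx ?orbT.
Qed.

Lemma ell_coef0 P : (ellP P)@_(U_(ix0)%MM) = P ix1.
Proof.
rewrite /ellP mcoeffB !mul_mpolyC !mcoeffZ !mcoeffX eqxx.
have -> : (U_(ix1) == U_(ix0) :> 'X_{1..4})%MM = false.
  apply/eqP => /mnmP /(_ ix0); rewrite !mnm1E //.
by rewrite mulr1 mulr0 subr0.
Qed.

Lemma ell_coef1 P : (ellP P)@_(U_(ix1)%MM) = - P ix0.
Proof.
rewrite /ellP mcoeffB !mul_mpolyC !mcoeffZ !mcoeffX eqxx.
have -> : (U_(ix0) == U_(ix1) :> 'X_{1..4})%MM = false.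
  apply/eqP => /mnmP /(_ ix0); rewrite !mnm1E //.
by rewrite mulr1 mulr0 sub0r.
Qed.

Lemma ell_neq0 P : Fn_point_rep P -> ellP P != 0.
Proof.
move=> [h _]; apply/negP => /eqP E.
have c0 := ell_coef0 P; have c1 := ell_coef1 P.
rewrite E !mcoeff0 in c0 c1.
case: h => h.
  by move: h; rewrite -oppr_eq0 -c1 eqxx.
by move: h; rewrite -c0 eqxx.
Qed.

Lemma ell_msize P : Fn_point_rep P -> msize (ellP P) = 2%N.
Proof.
move=> h; have nz := @ell_neq0 P h.
rewrite -(mlead_deg nz).
have := @ell_sup P _ (mlead_supp nz) => /orP[] /eqP ->; by rewrite mdegU.
Qed.

Lemma ell_irr P : Fn_point_rep P -> irreducible_cox (ellP P).
Proof.
move=> h; split; first by rewrite (@ell_msize P h).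
move=> u v E.
have nz := @ell_neq0 P h.
have nu : u != 0 by apply: contraNneq nz => hu; rewrite E hu mul0r.
have nv : v != 0 by apply: contraNneq nz => hv; rewrite E hv mulr0.
have := @ell_msize P h; rewrite E msizeM //.
have := msize_poly_eq0 u; have := msize_poly_eq0 v.
rewrite (negbTE nu) (negbTE nv).
case: (msize u) => [|su]; case: (msize v) => [|sv] //=; lia.
Qed.

Lemma ell_bihom n P : bihomogeneous n (ellP P).
Proof.
have hb : forall i : 'I_4, (i == ix0) || (i == ix1) -> bideg n U_(i)%MM = (1%:Z, 0%N).
  move=> i /orP[] /eqP ->; rewrite /bideg !mnm1E /= muln0 //.
move=> m m' /ell_sup hm /ell_sup hm'.
case/orP: hm => /eqP ->; case/orP: hm' => /eqP ->; by rewrite !hb ?eqxx ?orbT.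
Qed.

Lemma ell_on P : on_curve (ellP P) P.
Proof.
rewrite /on_curve /ellP mevalB !mevalM !mevalC !mevalXU; ring.
Qed.


Lemma sec_sup n A B (p : CoxRing) : section_of_class n A B p ->
  sup (wfam wy A) p /\ sup (wfam (wb n) B) p.
Proof.
by move=> h; split => m /h /andP [].
Qed.

Lemma exists_e (P : 'I_4 -> C) : Fn_point_rep P ->
  exists e0 e1 : C, P ix0 * e1 - P ix1 * e0 != 0.
Proof.
move=> [h _]; case: (eqVneq (P ix0) 0) => h0.
- exists 1, 0; rewrite h0 mulr0 mulr1 sub0r oppr_eq0.
  by case: h => //; rewrite h0 eqxx.
- by exists 0, 1; rewrite mulr1 mulr0 subr0.
Qed.

Lemma div_ell n A B k j (P : 'I_4 -> C) (p : CoxRing) : Fn_point_rep P ->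
  (j + A <= k)%N -> section_of_class n A B p -> ord_pt_ge P p k ->
  ord_curve_ge (ellP P) p j.
Proof.
move=> hP hj hs ho.
have [e0 [e1 hD]] := @exists_e P hP.
have [hy hb] := @sec_sup n A B p hs.
have [Q EQ] := @main_div n A B k j P e0 e1 p hD hj hy hb ho.
by exists Q.
Qed.

Theorem mainTheorem8 (n : nat) (L : nat * nat) (phi gamma : CoxRing)
    (P : 'I_4 -> C) :
  allowed_L n L ->
  section_of_class n (4 * L.1) (4 * L.2) phi ->
  section_of_class n (6 * L.1) (6 * L.2) gamma ->
  Fn_point_rep P ->
  ord_pt_ge P phi 8 ->
  ord_pt_ge P gamma 12 ->
  exists g : CoxRing,
    [/\ bihomogeneous n g, irreducible_cox g, on_curve g P,
        ord_curve_ge g phi 4 & ord_curve_ge g gamma 6].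
Proof.
move=> hL hphi hgam hP hop hog.
have hL1 : (L.1 <= 1)%N by case: hL => [->|[->|->]].
exists (ellP P); split.
- exact: ell_bihom.
- exact: ell_irr.
- exact: ell_on.
- apply: (@div_ell n (4 * L.1) (4 * L.2) 8 4 P phi hP _ hphi hop); lia.
- apply: (@div_ell n (6 * L.1) (6 * L.2) 12 6 P gamma hP _ hgam hog); lia.
Qed.
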